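(* Let $\mathcal{A}$, $\mathbf{r}$, $V_d$ and $C_{2^m}$ be as below. For every $m\ge3$, $\pi^{-1}(V_{2^m})=V_{2^{m+1}}$, where $\pi:C_{2^{m+1}}\to C_{2^m}$ is reduction modulo $2^m$.
   Context: Let $\mathcal{P}$ be a primitive integral Apollonian 3-circle packing (start with three mutually tangent circles; in each curvilinear triangular gap bounded by three mutually tangent circles inscribe the unique three circles such that the six circles involved are each tangent to four others and disjoint from the remaining one; iterate ad infinitum; integral means all curvatures are integers, primitive means their gcd is 1). Fix mutually tangent circles $C_1,C_2,C_3$ of $\mathcal{P}$ with curvatures $\kappa_1,\kappa_2,\kappa_3$ and the three circles $C_{1'},C_{2'},C_{3'}$ inscribed in one of their gaps, labeled so that $C_{i'}$ is disjoint from $C_i$; then $\kappa_1+\kappa_{1'}=\kappa_2+\kappa_{2'}=\kappa_3+\kappa_{3'}=2w$, and set $\mathbf{r}=(\kappa_1,\kappa_2,\kappa_3,w)^T$. Let $Q(\kappa_1,\kappa_2,\kappa_3,w)=w^2-2w(\kappa_1+\kappa_2+\kappa_3)+\kappa_1^2+\kappa_2^2+\kappa_3^2$. Let $\tilde{\mathcal{A}}\subset GL(4,\mathbb{Z})$ be generated by the eight matrices (rows separated by semicolons) $S_{123}=(1,0,0,0;0,1,0,0;0,0,1,0;2,2,2,-1)$, $S_{1'23}=(-3,4,4,4;0,1,0,0;0,0,1,0;-2,2,2,3)$, $S_{12'3}=(1,0,0,0;4,-3,4,4;0,0,1,0;2,-2,2,3)$, $S_{123'}=(1,0,0,0;0,1,0,0;4,4,-3,4;2,2,-2,3)$,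 $S_{1'2'3}=(-3,-4,4,12;-4,-3,4,12;0,0,1,0;-2,-2,2,7)$, $S_{1'23'}=(-3,4,-4,12;0,1,0,0;-4,4,-3,12;-2,2,-2,7)$, $S_{12'3'}=(1,0,0,0;4,-3,-4,12;4,-4,-3,12;2,-2,-2,7)$, $S_{1'2'3'}=(-3,-4,-4,20;-4,-3,-4,20;-4,-4,-3,20;-2,-2,-2,11)$, and let $\mathcal{A}$ be its index-2 subgroup of products of an even number of these generators. Let $V=\mathcal{A}\cdot\mathbf{r}\subset\mathbb{Z}^4$ and $V_d$ its reduction modulo $d$. For $m\ge1$, $C_{2^m}$ is the set of $\mathbf{v}\in(\mathbb{Z}/2^m\mathbb{Z})^4$ such that some integer lift $\mathbf{w}$ of $\mathbf{v}$ satisfies $Q(\mathbf{w})\equiv0\pmod{2^{m+1}}$. *)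

(* Defs.v *)
From mathcomp Require Import all_boot all_order all_algebra.
Set Implicit Arguments. Unset Strict Implicit. Unset Printing Implicit Defensive.
Import Order.TTheory GRing.Theory Num.Theory.
Local Open Scope ring_scope.

Definition mx_of_rows (l : seq (seq int)) : 'M[int]_4 :=
  \matrix_(i < 4, j < 4) nth 0 (nth [::] l i) j.

Definition vec4 (a b c d : int) : 'cV[int]_4 :=
  \col_(i < 4) nth 0 [:: a; b; c; d] i.

Definition cmp (v : 'cV[int]_4) (i : nat) : int := v (inord i) 0.

Definition S123  := mx_of_rows [:: [:: 1; 0; 0; 0]; [:: 0; 1; 0; 0]; [:: 0; 0; 1; 0]; [:: 2; 2; 2; -1]].
Definition S1'23 := mx_of_rows [:: [:: -3; 4; 4; 4]; [:: 0; 1; 0; 0]; [:: 0; 0; 1; 0]; [:: -2; 2; 2; 3]].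
Definition S12'3 := mx_of_rows [:: [:: 1; 0; 0; 0]; [:: 4; -3; 4; 4]; [:: 0; 0; 1; 0]; [:: 2; -2; 2; 3]].
Definition S123' := mx_of_rows [:: [:: 1; 0; 0; 0]; [:: 0; 1; 0; 0]; [:: 4; 4; -3; 4]; [:: 2; 2; -2; 3]].
Definition S1'2'3 := mx_of_rows [:: [:: -3; -4; 4; 12]; [:: -4; -3; 4; 12]; [:: 0; 0; 1; 0]; [:: -2; -2; 2; 7]].
Definition S1'23' := mx_of_rows [:: [:: -3; 4; -4; 12]; [:: 0; 1; 0; 0]; [:: -4; 4; -3; 12]; [:: -2; 2; -2; 7]].
Definition S12'3' := mx_of_rows [:: [:: 1; 0; 0; 0]; [:: 4; -3; -4; 12]; [:: 4; -4; -3; 12]; [:: 2; -2; -2; 7]].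
Definition S1'2'3' := mx_of_rows [:: [:: -3; -4; -4; 20]; [:: -4; -3; -4; 20]; [:: -4; -4; -3; 20]; [:: -2; -2; -2; 11]].

Definition gens : seq 'M[int]_4 :=
  [:: S123; S1'23; S12'3; S123'; S1'2'3; S1'23'; S12'3'; S1'2'3'].

(* The index-2 subgroup A: products of an even number of generators.
   (Each generator is an involution, so this is the set of even-length words.) *)
Definition inA (M : 'M[int]_4) : Prop :=
  exists2 s : seq 'M[int]_4, all (fun g => g \in gens) s && ~~ odd (size s)
    & M = foldr (@mulmx int 4 4 4) 1%:M s.

Definition Qf (v : 'cV[int]_4) : int :=
  let k1 := cmp v 0 in let k2 := cmp v 1 in let k3 := cmp v 2 in let w := cmp v 3 in
  w ^+ 2 - 2 * w * (k1 + k2 + k3) + k1 ^+ 2 + k2 ^+ 2 + k3 ^+ 2.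

Definition eqmodv (d : int) (u v : 'cV[int]_4) : Prop :=
  forall i : 'I_4, (u i ord0 == v i ord0 %[mod d])%Z.

(* x (an integer representative) lies in V_d = A.r mod d *)
Definition inV (r : 'cV[int]_4) (d : int) (x : 'cV[int]_4) : Prop :=
  exists2 g, inA g & eqmodv d (g *m r) x.

Definition inC (m : nat) (x : 'cV[int]_4) : Prop :=
  exists w : 'cV[int]_4, eqmodv (2 ^ m)%:Z w x /\ (Qf w == 0 %[mod (2 ^ m.+1)%:Z])%Z.

(* Main.v *)
Require Import Defs.
From mathcomp Require Import all_boot all_order all_algebra ring zify.
Import Order.TTheory GRing.Theory Num.Theory.
Local Open Scope ring_scope.

Lemma mxrows_mul (a00 a01 a02 a03 a10 a11 a12 a13 a20 a21 a22 a23 a30 a31 a32 a33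
  b00 b01 b02 b03 b10 b11 b12 b13 b20 b21 b22 b23 b30 b31 b32 b33 : int) :
  mx_of_rows [:: [:: a00; a01; a02; a03]; [:: a10; a11; a12; a13];
                 [:: a20; a21; a22; a23]; [:: a30; a31; a32; a33]] *m
  mx_of_rows [:: [:: b00; b01; b02; b03]; [:: b10; b11; b12; b13];
                 [:: b20; b21; b22; b23]; [:: b30; b31; b32; b33]] =
  mx_of_rows [::
   [:: a00*b00+a01*b10+a02*b20+a03*b30; a00*b01+a01*b11+a02*b21+a03*b31;
       a00*b02+a01*b12+a02*b22+a03*b32; a00*b03+a01*b13+a02*b23+a03*b33];
   [:: a10*b00+a11*b10+a12*b20+a13*b30; a10*b01+a11*b11+a12*b21+a13*b31;
       a10*b02+a11*b12+a12*b22+a13*b32; a10*b03+a11*b13+a12*b23+a13*b33];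
   [:: a20*b00+a21*b10+a22*b20+a23*b30; a20*b01+a21*b11+a22*b21+a23*b31;
       a20*b02+a21*b12+a22*b22+a23*b32; a20*b03+a21*b13+a22*b23+a23*b33];
   [:: a30*b00+a31*b10+a32*b20+a33*b30; a30*b01+a31*b11+a32*b21+a33*b31;
       a30*b02+a31*b12+a32*b22+a33*b32; a30*b03+a31*b13+a32*b23+a33*b33]].
Proof.
apply/matrixP => i j; rewrite !mxE !big_ord_recr big_ord0 /= !mxE /= add0r.
by case: i => [[|[|[|[|//]]]] ?]; case: j => [[|[|[|[|//]]]] ?].
Qed.

Lemma mxrows_vec (a00 a01 a02 a03 a10 a11 a12 a13 a20 a21 a22 a23 a30 a31 a32 a33
  b0 b1 b2 b3 : int) :
  mx_of_rows [:: [:: a00; a01; a02; a03]; [:: a10; a11; a12; a13];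
                 [:: a20; a21; a22; a23]; [:: a30; a31; a32; a33]] *m
  vec4 b0 b1 b2 b3 =
  vec4 (a00*b0+a01*b1+a02*b2+a03*b3) (a10*b0+a11*b1+a12*b2+a13*b3)
       (a20*b0+a21*b1+a22*b2+a23*b3) (a30*b0+a31*b1+a32*b2+a33*b3).
Proof.
apply/matrixP => i j; rewrite !mxE !big_ord_recr big_ord0 /= !mxE /= add0r.
by case: i => [[|[|[|[|//]]]] ?].
Qed.

Lemma vec4_cmp (v : 'cV[int]_4) : v = vec4 (cmp v 0) (cmp v 1) (cmp v 2) (cmp v 3).
Proof.
apply/matrixP => i j; rewrite !mxE /cmp (ord1 j).
by case: i => [[|[|[|[|//]]]] ?] /=; congr (v _ _); apply/val_inj; rewrite /= inordK.
Qed.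

Lemma cmp_vec4 a b c d : [/\ cmp (vec4 a b c d) 0 = a, cmp (vec4 a b c d) 1 = b,
   cmp (vec4 a b c d) 2 = c & cmp (vec4 a b c d) 3 = d].
Proof. by rewrite /cmp !mxE !inordK. Qed.

Lemma Qf_vec4 a b c d : Qf (vec4 a b c d) = d ^+ 2 - 2 * d * (a + b + c) + a ^+ 2 + b ^+ 2 + c ^+ 2.
Proof. by rewrite /Qf; case: (cmp_vec4 a b c d) => -> -> -> ->. Qed.

Lemma vec4D a b c d a' b' c' d' : vec4 a b c d + vec4 a' b' c' d' = vec4 (a+a') (b+b') (c+c') (d+d').
Proof. by apply/matrixP => i j; rewrite !mxE; case: i => [[|[|[|[|//]]]] ?]. Qed.
Lemma vec4Z s a b c d : s *: vec4 a b c d = vec4 (s*a) (s*b) (s*c) (s*d).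
Proof. by apply/matrixP => i j; rewrite !mxE; case: i => [[|[|[|[|//]]]] ?]. Qed.

Lemma eqmodv_vec4 d a b c e a' b' c' e' :
  eqmodv d (vec4 a b c e) (vec4 a' b' c' e') <->
  [/\ (a == a' %[mod d])%Z, (b == b' %[mod d])%Z, (c == c' %[mod d])%Z & (e == e' %[mod d])%Z].
Proof.
split.
  move=> H; split; [move: (H 0) | move: (H 1) | move: (H 2) | move: (H 3)]; by rewrite !mxE.
case=> H0 H1 H2 H3 i; rewrite !mxE; by case: i => [[|[|[|[|//]]]] ?].
Qed.

Lemma eqmodvP d u v : eqmodv d u v <-> exists z : 'cV[int]_4, u = v + d *: z.
Proof.
split.
  move=> H; exists (\col_i ((u i ord0 - v i ord0) %/ d)%Z).
  apply/matrixP => i j; rewrite (ord1 j) !mxE mulrC divzK; first by rewrite addrC subrK.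
  by rewrite -eqz_mod_dvd.
case=> z -> i; rewrite !mxE eqz_mod_dvd addrC addrK; exact: dvdz_mulr.
Qed.

Ltac mxcomp := apply/matrixP; case => [[|[|[|[|//]]]] ?]; case => [[|[|[|[|//]]]] ?];
  rewrite !mxE; vm_compute; reflexivity.

Ltac gcases tac := rewrite !inE; do 7 (case/orP; first by move/eqP->; tac); move/eqP->; tac.

Lemma gens_inv g : g \in gens -> g *m g = 1%:M.
Proof.
gcases ltac:(rewrite /S123 /S1'23 /S12'3 /S123' /S1'2'3 /S1'23' /S12'3' /S1'2'3' mxrows_mul; mxcomp).
Qed.

Lemma gens_Q g v : g \in gens -> Qf (g *m v) = Qf v.
Proof.
rewrite (vec4_cmp v).
gcases ltac:(rewrite /S123 /S1'23 /S12'3 /S123' /S1'2'3 /S1'23' /S12'3' /S1'2'3' mxrows_vec !Qf_vec4; ring).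
Qed.

Definition wp (s : seq 'M[int]_4) := foldr (@mulmx int 4 4 4) 1%:M s.

Lemma wp_cat s t : wp (s ++ t) = wp s *m wp t.
Proof. by elim: s => [|g s IH] /=; rewrite ?mul1mx // IH mulmxA. Qed.

Lemma inA1 : inA 1%:M.
Proof. by exists [::]. Qed.

Lemma inAM A B : inA A -> inA B -> inA (A *m B).
Proof.
case=> s /andP[Hs Es] ->; case=> t /andP[Ht Et] ->.
exists (s ++ t); last by have := wp_cat s t; rewrite /wp => ->.
by rewrite all_cat Hs Ht size_cat oddD (negbTE Es) (negbTE Et).
Qed.

Lemma wp_rev s : all (fun g => g \in gens) s -> wp (rev s) *m wp s = 1%:M.
Proof.
elim: s => [|g s IH] /=; first by rewrite mul1mx.
case/andP=> Hg Hs; rewrite rev_cons -cats1 wp_cat /= mulmx1 -mulmxA (mulmxA g) gens_inv //.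
by rewrite mul1mx IH.
Qed.

Lemma inA_inv A : inA A -> exists2 B, inA B & B *m A = 1%:M /\ A *m B = 1%:M.
Proof.
case=> s /andP[Hs Es] ->; exists (wp (rev s)).
  by exists (rev s); rewrite // all_rev Hs size_rev Es.
have H := wp_rev s Hs; split => //; exact: mulmx1C.
Qed.

Lemma inA_Q A v : inA A -> Qf (A *m v) = Qf v.
Proof.
case=> s /andP[Hs _] ->; elim: s Hs => [|g s IH] /=; first by rewrite mul1mx.
by case/andP=> Hg Hs; rewrite -mulmxA gens_Q // IH.
Qed.

Definition Pd (d : int) (X h : 'M[int]_4) := exists Y, h = 1%:M + d *: X + (2*d) *: Y.

Lemma reshape (d : int) (X Y : 'M[int]_4) : 1%:M + d *: X + (2*d) *: Y = 1%:M + d *: (X + 2 *: Y).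
Proof. by rewrite scalerDr scalerA addrA (mulrC 2). Qed.

Lemma key_mul (d : int) (A B : 'M[int]_4) :
  (1%:M + d *: A) *m (1%:M + d *: B) = 1%:M + d *: (A + B) + (d*d) *: (A *m B).
Proof.
rewrite mulmxDl !mulmxDr !mul1mx mulmx1 -scalemxAl -scalemxAr scalerA scalerDr.
set M := (_ *m _); clearbody M.
by apply/matrixP => i j; rewrite !mxE; ring.
Qed.

Lemma Pd_mul d e X1 X2 h1 h2 : d = 2 * e -> Pd d X1 h1 -> Pd d X2 h2 -> Pd d (X1 + X2) (h1 *m h2).
Proof.
move=> de [Y1 ->] [Y2 ->]; rewrite !reshape key_mul.
set M := (_ *m _); clearbody M.
exists (Y1 + Y2 + e *: M); apply/matrixP => i j; rewrite !mxE de; ring.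
Qed.

Lemma Pd_sq d e X h : d = 4 * e -> Pd d X h -> Pd (2 * d) X (h *m h).
Proof.
move=> de [Y ->]; rewrite !reshape key_mul.
set M := (_ *m _); clearbody M.
exists (Y + e *: M); apply/matrixP => i j; rewrite !mxE de; ring.
Qed.

Lemma Pd_one d : Pd d 0 1%:M.
Proof. by exists 0; rewrite !scaler0 !addr0. Qed.

Definition sqi n (h : 'M[int]_4) := iter n (fun B => B *m B) h.

Lemma sqi_Pd n X h : Pd 8 X h -> Pd (8 * (2 ^ n)%:Z) X (sqi n h).
Proof.
move=> H; elim: n => [|n IH] /=; first by rewrite expn0 mulr1.
rewrite expnS PoszM (mulrC 2%:Z) mulrA (mulrC _ 2).
apply: (Pd_sq _ (2 * (2 ^ n)%:Z) X (sqi n h) _ IH); ring.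
Qed.

Lemma sqi_inA n h : inA h -> inA (sqi n h).
Proof. by move=> H; elim: n => [|n IH] //=; exact: inAM. Qed.
Lemma mxrows_1Z (s a00 a01 a02 a03 a10 a11 a12 a13 a20 a21 a22 a23 a30 a31 a32 a33 : int) :
  1%:M + s *: mx_of_rows [:: [:: a00; a01; a02; a03]; [:: a10; a11; a12; a13];
                 [:: a20; a21; a22; a23]; [:: a30; a31; a32; a33]] =
  mx_of_rows [:: [:: 1 + s*a00; s*a01; s*a02; s*a03]; [:: s*a10; 1 + s*a11; s*a12; s*a13];
                 [:: s*a20; s*a21; 1 + s*a22; s*a23]; [:: s*a30; s*a31; s*a32; 1 + s*a33]].
Proof.
apply/matrixP => i j; rewrite !mxE.
by case: i => [[|[|[|[|//]]]] ?]; case: j => [[|[|[|[|//]]]] ?]; rewrite /= ?add0r ?addr0.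
Qed.
Definition Z1 : 'M[int]_4 := mx_of_rows [:: [:: -1; 3; 3; 1]; [:: 0; 0; 0; 0]; [:: 0; 0; 0; 0]; [:: -1; 4; 4; 1]].
Definition W1 : seq 'M[int]_4 := [:: S123; S1'23; S123; S1'23].
Lemma W1_Z : wp W1 = 1%:M + 8 *: Z1.
Proof. rewrite /wp /W1 /= mulmx1 /Z1 /S123 /S1'23 /S12'3 /S123' /S1'2'3 /S1'23' /S12'3' /S1'2'3' !mxrows_mul mxrows_1Z; f_equal; vm_compute; reflexivity. Qed.
Definition Z2 : 'M[int]_4 := mx_of_rows [:: [:: -5; -10; 11; 26]; [:: -1; -2; 2; 5]; [:: 0; 0; 0; 0]; [:: -9; -18; 20; 47]].
Definition W2 : seq 'M[int]_4 := [:: S123; S1'23; S12'3; S1'2'3].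
Lemma W2_Z : wp W2 = 1%:M + 8 *: Z2.
Proof. rewrite /wp /W2 /= mulmx1 /Z2 /S123 /S1'23 /S12'3 /S123' /S1'2'3 /S1'23' /S12'3' /S1'2'3' !mxrows_mul mxrows_1Z; f_equal; vm_compute; reflexivity. Qed.
Definition Z3 : 'M[int]_4 := mx_of_rows [:: [:: -5; 11; -10; 26]; [:: 0; 0; 0; 0]; [:: -1; 2; -2; 5]; [:: -9; 20; -18; 47]].
Definition W3 : seq 'M[int]_4 := [:: S123; S1'23; S123'; S1'23'].
Lemma W3_Z : wp W3 = 1%:M + 8 *: Z3.
Proof. rewrite /wp /W3 /= mulmx1 /Z3 /S123 /S1'23 /S12'3 /S123' /S1'2'3 /S1'23' /S12'3' /S1'2'3' !mxrows_mul mxrows_1Z; f_equal; vm_compute; reflexivity. Qed.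
Definition Z4 : 'M[int]_4 := mx_of_rows [:: [:: 0; 0; 0; 0]; [:: 3; -1; 3; 1]; [:: 0; 0; 0; 0]; [:: 4; -1; 4; 1]].
Definition W4 : seq 'M[int]_4 := [:: S123; S12'3; S123; S12'3].
Lemma W4_Z : wp W4 = 1%:M + 8 *: Z4.
Proof. rewrite /wp /W4 /= mulmx1 /Z4 /S123 /S1'23 /S12'3 /S123' /S1'2'3 /S1'23' /S12'3' /S1'2'3' !mxrows_mul mxrows_1Z; f_equal; vm_compute; reflexivity. Qed.
Definition Z5 : 'M[int]_4 := mx_of_rows [:: [:: 0; 0; 0; 0]; [:: 11; -5; -10; 26]; [:: 2; -1; -2; 5]; [:: 20; -9; -18; 47]].
Definition W5 : seq 'M[int]_4 := [:: S123; S12'3; S123'; S12'3'].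
Lemma W5_Z : wp W5 = 1%:M + 8 *: Z5.
Proof. rewrite /wp /W5 /= mulmx1 /Z5 /S123 /S1'23 /S12'3 /S123' /S1'2'3 /S1'23' /S12'3' /S1'2'3' !mxrows_mul mxrows_1Z; f_equal; vm_compute; reflexivity. Qed.
Definition Z6 : 'M[int]_4 := mx_of_rows [:: [:: 0; 0; 0; 0]; [:: 0; 0; 0; 0]; [:: 3; 3; -1; 1]; [:: 4; 4; -1; 1]].
Definition W6 : seq 'M[int]_4 := [:: S123; S123'; S123; S123'].
Lemma W6_Z : wp W6 = 1%:M + 8 *: Z6.
Proof. rewrite /wp /W6 /= mulmx1 /Z6 /S123 /S1'23 /S12'3 /S123' /S1'2'3 /S1'23' /S12'3' /S1'2'3' !mxrows_mul mxrows_1Z; f_equal; vm_compute; reflexivity. Qed.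
Definition e0 (b1 b2 b3 b4 b5 b6 k1 k2 k3 w : int) : int :=
  b1 * ((-1)*k1 + (3)*k2 + (3)*k3 + (1)*w) + b2 * ((-5)*k1 + (-10)*k2 + (11)*k3 + (26)*w) + b3 * ((-5)*k1 + (11)*k2 + (-10)*k3 + (26)*w) + b4 * ((0)*k1 + (0)*k2 + (0)*k3 + (0)*w) + b5 * ((0)*k1 + (0)*k2 + (0)*k3 + (0)*w) + b6 * ((0)*k1 + (0)*k2 + (0)*k3 + (0)*w).
Definition e1 (b1 b2 b3 b4 b5 b6 k1 k2 k3 w : int) : int :=
  b1 * ((0)*k1 + (0)*k2 + (0)*k3 + (0)*w) + b2 * ((-1)*k1 + (-2)*k2 + (2)*k3 + (5)*w) + b3 * ((0)*k1 + (0)*k2 + (0)*k3 + (0)*w) + b4 * ((3)*k1 + (-1)*k2 + (3)*k3 + (1)*w) + b5 * ((11)*k1 + (-5)*k2 + (-10)*k3 + (26)*w) + b6 * ((0)*k1 + (0)*k2 + (0)*k3 + (0)*w).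
Definition e2 (b1 b2 b3 b4 b5 b6 k1 k2 k3 w : int) : int :=
  b1 * ((0)*k1 + (0)*k2 + (0)*k3 + (0)*w) + b2 * ((0)*k1 + (0)*k2 + (0)*k3 + (0)*w) + b3 * ((-1)*k1 + (2)*k2 + (-2)*k3 + (5)*w) + b4 * ((0)*k1 + (0)*k2 + (0)*k3 + (0)*w) + b5 * ((2)*k1 + (-1)*k2 + (-2)*k3 + (5)*w) + b6 * ((3)*k1 + (3)*k2 + (-1)*k3 + (1)*w).
Definition e3 (b1 b2 b3 b4 b5 b6 k1 k2 k3 w : int) : int :=
  b1 * ((-1)*k1 + (4)*k2 + (4)*k3 + (1)*w) + b2 * ((-9)*k1 + (-18)*k2 + (20)*k3 + (47)*w) + b3 * ((-9)*k1 + (20)*k2 + (-18)*k3 + (47)*w) + b4 * ((4)*k1 + (-1)*k2 + (4)*k3 + (1)*w) + b5 * ((20)*k1 + (-9)*k2 + (-18)*k3 + (47)*w) + b6 * ((4)*k1 + (4)*k2 + (-1)*k3 + (1)*w).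

Definition b2z (b : bool) : int := if b then 1 else 0.
Definition Lf (k1 k2 k3 w u1 u2 u3 u4 : int) : int :=
  (k1 - w)*u1 + (k2 - w)*u2 + (k3 - w)*u3 + (w - k1 - k2 - k3)*u4.
Definition Qe (k1 k2 k3 w : int) : int :=
  w ^+ 2 - 2 * w * (k1 + k2 + k3) + k1 ^+ 2 + k2 ^+ 2 + k3 ^+ 2.
Definition bl := [:: false; true].

Definition okb (a1 a2 a3 a4 c1 c2 c3 c4 b1 b2 b3 b4 b5 b6 : bool) : bool :=
  let A1 := b2z a1 in let A2 := b2z a2 in let A3 := b2z a3 in let A4 := b2z a4 in
  let B1 := b2z b1 in let B2 := b2z b2 in let B3 := b2z b3 in
  let B4 := b2z b4 in let B5 := b2z b5 in let B6 := b2z b6 in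
  [&& (2 %| e0 B1 B2 B3 B4 B5 B6 A1 A2 A3 A4 - b2z c1)%Z,
      (2 %| e1 B1 B2 B3 B4 B5 B6 A1 A2 A3 A4 - b2z c2)%Z,
      (2 %| e2 B1 B2 B3 B4 B5 B6 A1 A2 A3 A4 - b2z c3)%Z &
      (2 %| e3 B1 B2 B3 B4 B5 B6 A1 A2 A3 A4 - b2z c4)%Z].

Definition condb (a1 a2 a3 a4 c1 c2 c3 c4 : bool) : bool :=
  [&& ~~ [&& a1 == a4, a2 == a4 & a3 == a4],
      (2 %| Qe (b2z a1) (b2z a2) (b2z a3) (b2z a4))%Z &
      (2 %| Lf (b2z a1) (b2z a2) (b2z a3) (b2z a4) (b2z c1) (b2z c2) (b2z c3) (b2z c4))%Z].

Definition chk : bool :=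
  all (fun a1 => all (fun a2 => all (fun a3 => all (fun a4 =>
  all (fun c1 => all (fun c2 => all (fun c3 => all (fun c4 =>
   condb a1 a2 a3 a4 c1 c2 c3 c4 ==>
   has (fun b1 => has (fun b2 => has (fun b3 => has (fun b4 => has (fun b5 => has (fun b6 =>
     okb a1 a2 a3 a4 c1 c2 c3 c4 b1 b2 b3 b4 b5 b6) bl) bl) bl) bl) bl) bl) bl) bl) bl) bl) bl) bl) bl) bl.

Lemma chk_true : chk.
Proof. vm_compute. reflexivity. Qed.

Lemma memb b : b \in bl. Proof. by case: b. Qed.

Lemma Pd_sel d X h b : Pd d X h -> Pd d (b2z b *: X) (if b then h else 1%:M).
Proof. by case: b => /= H; rewrite ?scale1r ?scale0r //; exact: Pd_one. Qed.

Lemma inA_sel h (b : bool) : inA h -> inA (if b then h else 1%:M).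
Proof. by case: b => // _; exact: inA1. Qed.

Lemma inA_W W : W \in [:: W1; W2; W3; W4; W5; W6] -> inA (wp W).
Proof.
rewrite !inE => H; exists W => //; move: H.
do 5 (case/orP; first by move/eqP ->; rewrite /= !inE !eqxx !orbT).
by move/eqP ->; rewrite /= !inE !eqxx !orbT.
Qed.

Lemma Pd_W n W Z : wp W = 1%:M + 8 *: Z -> Pd (8 * (2 ^ n)%:Z) Z (sqi n (wp W)).
Proof. move=> E; apply: sqi_Pd; exists 0; by rewrite E scaler0 addr0. Qed.

Lemma dv2 x K E : x = 2 * K + E -> (2 %| E)%Z -> (2 %| x)%Z.
Proof. by move=> -> HE; apply: rpredD => //; apply: dvdz_mulr; exact: dvdzz. Qed.

Lemma fiber n q1 q2 q3 q4 v1 v2 v3 v4 a1 a2 a3 a4 c1 c2 c3 c4 :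
  condb a1 a2 a3 a4 c1 c2 c3 c4 ->
  exists2 h, inA h &
   eqmodv (16 * (2^n)%:Z)
     (h *m vec4 (2*q1 + b2z a1) (2*q2 + b2z a2) (2*q3 + b2z a3) (2*q4 + b2z a4))
     (vec4 (2*q1 + b2z a1) (2*q2 + b2z a2) (2*q3 + b2z a3) (2*q4 + b2z a4) +
      (8 * (2^n)%:Z) *: vec4 (2*v1 + b2z c1) (2*v2 + b2z c2) (2*v3 + b2z c3) (2*v4 + b2z c4)).
Proof.
move=> Hc; have := chk_true; rewrite /chk.
move=> /allP/(_ a1 (memb a1)) /allP/(_ a2 (memb a2)) /allP/(_ a3 (memb a3)) /allP/(_ a4 (memb a4)).
move=> /allP/(_ c1 (memb c1)) /allP/(_ c2 (memb c2)) /allP/(_ c3 (memb c3)) /allP/(_ c4 (memb c4)).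
move=> /implyP/(_ Hc) /hasP[b1 _] /hasP[b2 _] /hasP[b3 _] /hasP[b4 _] /hasP[b5 _] /hasP[b6 _].
rewrite /okb /= => /and4P[H0 H1 H2 H3].
set T := (2 ^ n)%:Z.
set sel := fun (b : bool) (W : seq 'M[int]_4) => if b then sqi n (wp W) else 1%:M.
exists (sel b1 W1 *m (sel b2 W2 *m (sel b3 W3 *m (sel b4 W4 *m (sel b5 W5 *m sel b6 W6))))).
  by rewrite /sel; repeat apply: inAM; apply: inA_sel; apply: sqi_inA; apply: inA_W;
     rewrite !inE eqxx ?orbT.
have dE : 8 * T = 2 * (4 * T) by ring.
have PD : forall b W Z, wp W = 1%:M + 8 *: Z -> Pd (8 * T) (b2z b *: Z) (sel b W).
  by move=> b W Z E; apply: Pd_sel; apply: Pd_W.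
have := Pd_mul _ _ _ _ _ _ dE (PD b1 _ _ W1_Z) (Pd_mul _ _ _ _ _ _ dE (PD b2 _ _ W2_Z)
  (Pd_mul _ _ _ _ _ _ dE (PD b3 _ _ W3_Z) (Pd_mul _ _ _ _ _ _ dE (PD b4 _ _ W4_Z)
  (Pd_mul _ _ _ _ _ _ dE (PD b5 _ _ W5_Z) (PD b6 _ _ W6_Z))))).
case=> Y ->.
set r := vec4 _ _ _ _; set u := vec4 _ _ _ _.
set X := (b2z b1 *: Z1 + _).
have HX : eqmodv 2 (X *m r) u.
  rewrite /X /r /u !mulmxDl -!scalemxAl /Z1 /Z2 /Z3 /Z4 /Z5 /Z6 !mxrows_vec !vec4Z !vec4D.
  apply/eqmodv_vec4; split; rewrite eqz_mod_dvd.
  - apply: (dv2 _ (e0 (b2z b1) (b2z b2) (b2z b3) (b2z b4) (b2z b5) (b2z b6) q1 q2 q3 q4 - v1) _ _ H0).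
    rewrite /e0; ring.
  - apply: (dv2 _ (e1 (b2z b1) (b2z b2) (b2z b3) (b2z b4) (b2z b5) (b2z b6) q1 q2 q3 q4 - v2) _ _ H1).
    rewrite /e1; ring.
  - apply: (dv2 _ (e2 (b2z b1) (b2z b2) (b2z b3) (b2z b4) (b2z b5) (b2z b6) q1 q2 q3 q4 - v3) _ _ H2).
    rewrite /e2; ring.
  - apply: (dv2 _ (e3 (b2z b1) (b2z b2) (b2z b3) (b2z b4) (b2z b5) (b2z b6) q1 q2 q3 q4 - v4) _ _ H3).
    rewrite /e3; ring.
case/eqmodvP: HX => t Ht.
apply/eqmodvP; exists (t + Y *m r).
rewrite !mulmxDl mul1mx -!scalemxAl Ht.
clearbody r u; set Yr := Y *m r; clearbody Yr.
apply/matrixP => i j; rewrite !mxE; ring.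
Qed.

Lemma par (z : int) : exists q (a : bool), z = 2 * q + b2z a.
Proof.
exists (z %/ 2)%Z, ((z %% 2)%Z == 1).
have h0 : (0 <= (z %% 2)%Z) by apply: modz_ge0.
have h1 : ((z %% 2)%Z < 2) by apply: ltz_pmod.
rewrite {1}(divz_eq z 2) mulrC; congr (_ + _).
rewrite /b2z; case: eqP => //; lia.
Qed.

Lemma Qf_exp k1 k2 k3 w u1 u2 u3 u4 D :
  Qf (vec4 k1 k2 k3 w + D *: vec4 u1 u2 u3 u4) =
  Qe k1 k2 k3 w + 2 * D * Lf k1 k2 k3 w u1 u2 u3 u4 + D * D * Qe u1 u2 u3 u4.
Proof. by rewrite vec4Z vec4D Qf_vec4 /Qe /Lf; ring. Qed.

Lemma dvd2_gcd (l : seq int) : all (fun z => 2 %| z)%Z l -> (2 %| foldr gcdz 0 l)%Z.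
Proof. by elim: l => [|z l IH] //= /andP[Hz Hl]; rewrite dvdz_gcd Hz IH. Qed.

Lemma dvE x K E : x = 2 * K + E -> (2 %| x)%Z -> (2 %| E)%Z.
Proof.
move=> -> H; have -> : E = (2 * K + E) - 2 * K by ring.
by apply: rpredB => //; apply: dvdz_mulr; exact: dvdzz.
Qed.

Definition Bh (x1 x2 x3 x4 y1 y2 y3 y4 : int) : int :=
  x4 * y4 - x4 * (y1 + y2 + y3) - y4 * (x1 + x2 + x3) + x1 * y1 + x2 * y2 + x3 * y3.

Theorem lemma2p9 (k1 k2 k3 k1' k2' k3' w : int) :
  k1 + k1' = 2 * w -> k2 + k2' = 2 * w -> k3 + k3' = 2 * w ->
  Qf (vec4 k1 k2 k3 w) = 0 ->
  foldr gcdz 0 [:: k1; k2; k3; k1'; k2'; k3'] = 1 ->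
  forall m : nat, (3 <= m)%N ->
  forall x : 'cV[int]_4,
    (inC m.+1 x /\ inV (vec4 k1 k2 k3 w) (2 ^ m)%:Z x)
    <-> inV (vec4 k1 k2 k3 w) (2 ^ m.+1)%:Z x.
Proof.
move=> E1 E2 E3 HQ Hg m Hm x.
have pow : forall n, (2 ^ n.+1)%:Z = 2 * (2^n)%:Z by move=> n; rewrite expnS PoszM.
split; last first.
  case=> g gA Hgx; split.
    exists (g *m vec4 k1 k2 k3 w); split => //; by rewrite inA_Q // HQ.
  exists g => // i; move: (Hgx i); rewrite !eqz_mod_dvd => H; apply: dvdz_trans H.
  by rewrite pow; apply: dvdz_mull; exact: dvdzz.
case: m Hm => [|[|[|n]]] // _.
set T := (2^n)%:Z.
have e3 : (2 ^ n.+3)%:Z = 8 * T by rewrite !pow /T; ring.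
have e4 : (2 ^ n.+4)%:Z = 16 * T by rewrite !pow /T; ring.
have e5 : (2 ^ n.+4.+1)%:Z = 32 * T by rewrite !pow /T; ring.
have T0 : T != 0 by rewrite /T eqz_nat expn_eq0.
rewrite e4 /inC e4 e5 e3.
case=> [[w0 [Hw Qw]] [g gA Hgx]].
have [gi giA [gig ggi]] := inA_inv _ gA.
case/eqmodvP: Hgx => z1 Hz1.
case/eqmodvP: Hw => z2 Hz2.
set u := 2 *: (gi *m z2) - gi *m z1.
have Hw' : gi *m w0 = vec4 k1 k2 k3 w + (8 * T) *: u.
  rewrite Hz2; have -> : x = g *m vec4 k1 k2 k3 w - (8*T) *: z1 by rewrite Hz1 addrK.
  rewrite !mulmxDr ?mulmxBr ?mulmxN mulmxA gig mul1mx -!scalemxAr /u.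
  set a := gi *m z1; set b := gi *m z2; clearbody a b.
  apply/matrixP => i j; rewrite !mxE; ring.
have HQ' := inA_Q _ w0 giA.
rewrite Hw' (vec4_cmp u) Qf_exp in HQ'.
have HQk : Qe k1 k2 k3 w = 0 by rewrite -HQ Qf_vec4.
move: Qw; rewrite eqz_mod_dvd subr0 -HQ' HQk add0r => Qw.
set L := Lf _ _ _ _ _ _ _ _ in Qw.
have HL : (2 %| L)%Z.
  have : ((16*T) * 2 %| (16*T) * (L + 4*T*Qe (cmp u 0) (cmp u 1) (cmp u 2) (cmp u 3)))%Z.
    have -> : 16 * T * 2 = 32 * T by ring.
    have -> : 16 * T * (L + 4 * T * Qe (cmp u 0) (cmp u 1) (cmp u 2) (cmp u 3)) =
      2 * (8 * T) * L + 8 * T * (8 * T) * Qe (cmp u 0) (cmp u 1) (cmp u 2) (cmp u 3) by ring.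
    exact: Qw.
  rewrite dvdz_mul2l ?mulf_neq0 // => H.
  by apply: (dvE _ (2*T*Qe (cmp u 0) (cmp u 1) (cmp u 2) (cmp u 3)) _ _ H); ring.
have [q1 [a1 ek1]] := par k1; have [q2 [a2 ek2]] := par k2.
have [q3 [a3 ek3]] := par k3; have [q4 [a4 ek4]] := par w.
have [v1 [c1 eu1]] := par (cmp u 0); have [v2 [c2 eu2]] := par (cmp u 1).
have [v3 [c3 eu3]] := par (cmp u 2); have [v4 [c4 eu4]] := par (cmp u 3).
have Hc : condb a1 a2 a3 a4 c1 c2 c3 c4.
  rewrite /condb; apply/and3P; split.
  - apply/negP => /and3P[/eqP ea1 /eqP ea2 /eqP ea3]; subst a1 a2 a3.
    case: a4 ek1 ek2 ek3 ek4 => /= ek1 ek2 ek3 ek4.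
    + have H4 : 4 * (q4^+2 - 2*q4 - 2*q4*(q1+q2+q3) + q1^+2 + q2^+2 + q3^+2) = 2.
        apply/eqP; rewrite -subr_eq0; apply/eqP; rewrite -HQk ek1 ek2 ek3 ek4 /Qe; ring.
      have := dvdz_mulr (q4^+2 - 2*q4 - 2*q4*(q1+q2+q3) + q1^+2 + q2^+2 + q3^+2) (dvdzz 4).
      by rewrite H4.
    + have : (2 %| foldr gcdz 0 [:: k1; k2; k3; k1'; k2'; k3'])%Z.
        apply: dvd2_gcd; rewrite /= !andbT; repeat (apply/andP; split).
        * by apply: (dv2 _ q1 0); rewrite ?dvdz0 // ek1 /b2z; ring.
        * by apply: (dv2 _ q2 0); rewrite ?dvdz0 // ek2 /b2z; ring.
        * by apply: (dv2 _ q3 0); rewrite ?dvdz0 // ek3 /b2z; ring.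
        * apply: (dv2 _ (2*q4 - q1) 0); rewrite ?dvdz0 // (_ : k1' = 2 * w - k1);
            [rewrite ek1 ek4 /b2z; ring | rewrite -E1; ring].
        * apply: (dv2 _ (2*q4 - q2) 0); rewrite ?dvdz0 // (_ : k2' = 2 * w - k2);
            [rewrite ek2 ek4 /b2z; ring | rewrite -E2; ring].
        * apply: (dv2 _ (2*q4 - q3) 0); rewrite ?dvdz0 // (_ : k3' = 2 * w - k3);
            [rewrite ek3 ek4 /b2z; ring | rewrite -E3; ring].
      by rewrite Hg.
  - apply: (dvE (Qe k1 k2 k3 w) (2 * Qe q1 q2 q3 q4 + 2 * Bh q1 q2 q3 q4 (b2z a1) (b2z a2) (b2z a3) (b2z a4))).
      by rewrite ek1 ek2 ek3 ek4 /Qe /Bh; ring.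
    by rewrite HQk dvdz0.
  - apply: (dvE L (Lf q1 q2 q3 q4 (cmp u 0) (cmp u 1) (cmp u 2) (cmp u 3) +
                   Lf (b2z a1) (b2z a2) (b2z a3) (b2z a4) v1 v2 v3 v4)) => //.
    by rewrite /L eu1 eu2 eu3 eu4 ek1 ek2 ek3 ek4 /Lf; ring.
have [h hA Hh] := fiber n q1 q2 q3 q4 v1 v2 v3 v4 a1 a2 a3 a4 c1 c2 c3 c4 Hc.
rewrite -ek1 -ek2 -ek3 -ek4 -eu1 -eu2 -eu3 -eu4 -(vec4_cmp u) in Hh.
exists (g *m h); first exact: inAM.
case/eqmodvP: Hh => z3 Hz3.
apply/eqmodvP; exists (z2 + g *m z3).
rewrite -mulmxA Hz3 !mulmxDr -!scalemxAr Hz1 /u mulmxDr mulmxN -!scalemxAr !mulmxA ggi !mul1mx.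
set gz := g *m z3; clearbody gz.
apply/matrixP => i j; rewrite !mxE; ring.
Qed.
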